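(* Let $G$ be a finite group and $S\subseteq G\setminus\{e\}$ such that $\mathrm{Cay}(G,S)$ is a weakly distance-regular digraph, and let $\mathcal{D}(G,S)$ be its two-way distance module. Then $\mathcal{D}(G,S)$ is a primitive S-ring if and only if $\mathrm{Cay}(G,S)$ is primitive.
   Context: $\mathrm{Cay}(G,S)$ has vertex set $G$ and arcs $(x,y)$ with $yx^{-1}\in S$. For a digraph $\Gamma$, $\tilde\partial(x,y)=(\partial(x,y),\partial(y,x))$ with $\partial$ the directed distance, $\Gamma_{\tilde i}=\{(x,y):\tilde\partial(x,y)=\tilde i\}$; a strongly connected $\Gamma$ is weakly distance-regular if $(V\Gamma,\{\Gamma_{\tilde i}\})$ is an association scheme. In an association scheme, for relations $R_i,R_j$ let $R_iR_j$ be the set of relations $R_l$ with nonzero intersection number $p_{i,j}^l$; a set $F$ of relations is closed if $R_i^{\mathrm T}R_j\subseteq F$ for all $R_i,R_j\in F$; the scheme is primitive if the smallest closed set containing any non-diagonal relation is the set of all relations; $\Gamma$ is primitive if its scheme is. For $X\subseteq G$, $\underline{X}$ denotes $\sum_{x\in X}x\in\mathbb{Z}[G]$. A subring $\mathcal A\subseteq\mathbb{Z}[G]$ is an S-ring over $G$ if there is a partition $\mathcal S$ of $G$ with $\{e\}\in\mathcal S$, $X^{(-1)}=\{x^{-1}:x\in X\}\in\mathcal S$ for all $X\in\mathcal S$, and $\{\underline X:X\in\mathcal S\}$ a $\mathbb{Z}$-basis of $\mathcal A$; a subgroup $H$ of $G$ is an $\mathcal A$-subgroup if $\underline H\in\mathcal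 A$; $\mathcal A$ is primitive if it has no $\mathcal A$-subgroup other than $\{e\}$ and $G$. With $\Gamma=\mathrm{Cay}(G,S)$ and $N_{\tilde i}=\{y:\tilde\partial(e,y)=\tilde i\}$, the two-way distance module $\mathcal{D}(G,S)$ is the $\mathbb{Z}$-submodule of $\mathbb{Z}[G]$ spanned by the elements $\underline{N_{\tilde i}}$, $\tilde i$ ranging over all two-way distances of $\Gamma$. *)

(* Defs.v *)
From mathcomp Require Import all_boot all_order all_algebra all_fingroup.
Set Implicit Arguments. Unset Strict Implicit. Unset Printing Implicit Defensive.
Import GRing.Theory.

Section Defs.
Variable gT : finGroupType.

Definition cay_arc (S : {set gT}) (x y : gT) : bool := ((y * x^-1)%g \in S).

Fixpoint cay_ball (S : {set gT}) (k : nat) (x : gT) : {set gT} :=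
  if k is k'.+1 then
    cay_ball S k' x :|: [set y | [exists z in cay_ball S k' x, cay_arc S z y]]
  else [set x].

Definition strongly_connected (S : {set gT}) : Prop :=
  forall x y : gT, exists k, y \in cay_ball S k x.

(* directed distance d(x,y): least k with y reachable from x in <= k steps
   (every finite distance is < #|gT|; the value #|gT| signals "unreachable",
   which cannot happen under strong connectivity) *)
Definition ddist (S : {set gT}) (x y : gT) : nat :=
  find (fun k => y \in cay_ball S k x) (iota 0 #|gT|).

Definition tdist (S : {set gT}) (x y : gT) : nat * nat := (ddist S x y, ddist S y x).

End Defs.

Section Schemes.
Variable V : finType.

Definition fibres (I : eqType) (c : V -> V -> I) : {set {set V * V}} :=
  [set [set p : V * V | c p.1 p.2 == c q.1 q.2] | q : V * V].

Definition diagR : {set V * V} := [set p : V * V | p.1 == p.2].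
Definition transpR (R : {set V * V}) : {set V * V} := [set p : V * V | (p.2, p.1) \in R].

Definition inter_num (R1 R2 R3 : {set V * V}) : nat :=
  if [pick q in R3] is Some q then
    #|[set z | ((q.1, z) \in R1) && ((z, q.2) \in R2)]|
  else 0.

Definition is_assoc_scheme (Rs : {set {set V * V}}) : Prop :=
  [/\ partition Rs [set: V * V],
      diagR \in Rs,
      (forall R, R \in Rs -> transpR R \in Rs) &
      (forall R1 R2 R3, R1 \in Rs -> R2 \in Rs -> R3 \in Rs ->
        forall x y x' y', (x, y) \in R3 -> (x', y') \in R3 ->
          #|[set z | ((x, z) \in R1) && ((z, y) \in R2)]| =
          #|[set z | ((x', z) \in R1) && ((z, y') \in R2)]|)].

Definition rel_prod (Rs : {set {set V * V}}) (R1 R2 : {set V * V}) : {set {set V * V}} :=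
  [set R in Rs | inter_num R1 R2 R != 0%N].

Definition closed_rels (Rs F : {set {set V * V}}) : Prop :=
  forall R1 R2, R1 \in F -> R2 \in F -> rel_prod Rs (transpR R1) R2 \subset F.

Definition primitive_scheme (Rs : {set {set V * V}}) : Prop :=
  forall R, R \in Rs -> R != diagR ->
    forall F : {set {set V * V}}, F \subset Rs -> closed_rels Rs F -> R \in F -> F = Rs.

End Schemes.

Section Cayley.
Variable gT : finGroupType.

Definition cay_rels (S : {set gT}) : {set {set gT * gT}} := fibres (tdist S).

Definition weakly_distance_regular (S : {set gT}) : Prop :=
  strongly_connected S /\ is_assoc_scheme (cay_rels S).

Definition primitive_digraph (S : {set gT}) : Prop := primitive_scheme (cay_rels S).

Definition zg := {ffun gT -> int}.

Definition ul (X : {set gT}) : zg := [ffun g => if g \in X then 1%R else 0%R].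

Definition zg_mul (a b : zg) : zg :=
  [ffun g => (\sum_(h : gT) a h * b (h^-1 * g)%g)%R].

Definition zspan (P : {set {set gT}}) (a : zg) : Prop :=
  exists l : {set gT} -> int, a = [ffun g => (\sum_(X in P) l X * ul X g)%R].

Definition zbasis (P : {set {set gT}}) (A : zg -> Prop) : Prop :=
  (forall a, A a <-> zspan P a) /\
  (forall l : {set gT} -> int,
     [ffun g => (\sum_(X in P) l X * ul X g)%R] = [ffun _ => 0%R] ->
     forall X, X \in P -> l X = 0%R).

Definition is_Sring (A : zg -> Prop) : Prop :=
  (forall a b, A a -> A b -> A (zg_mul a b)) /\
  exists P : {set {set gT}},
    [/\ partition P [set: gT],
        [set 1%g] \in P,
        (forall X, X \in P -> [set x^-1 | x in X]%g \in P) &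
        zbasis P A].

Definition primitive_Sring (A : zg -> Prop) : Prop :=
  is_Sring A /\
  forall H : {group gT}, A (ul H) -> (H :==: 1)%g || (H :==: [set: gT]).

(* the two-way distance module D(G,S): spanned by ul N_i,
   N_i = {y | ~d(e,y) = i}, i ranging over the two-way distances *)
Definition tw_classes (S : {set gT}) : {set {set gT}} :=
  [set [set y | tdist S 1%g y == tdist S 1%g x] | x : gT].

Definition twd_module (S : {set gT}) : zg -> Prop := zspan (tw_classes S).

End Cayley.

(* Main.v *)
Require Import Defs.
From mathcomp Require Import all_boot all_order all_algebra all_fingroup.
Set Implicit Arguments. Unset Strict Implicit. Unset Printing Implicit Defensive.
Import GRing.Theory.

Section Aux.
Variable gT : finGroupType.
Variable S : {set gT}.
Local Open Scope group_scope.

Lemma ball_trans k x y h : (y * h \in cay_ball S k (x * h)) = (y \in cay_ball S k x).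
Proof.
elim: k y => [|k IH] y /=; first by rewrite !inE (inj_eq (mulIg h)).
rewrite !inE IH; congr (_ || _).
apply/existsP/existsP => [[z /andP[zb za]]|[z /andP[zb za]]].
  exists (z * h^-1); rewrite -IH mulgKV zb /=.
  by rewrite /cay_arc invMg invgK mulgA.
exists (z * h); rewrite IH zb /=.
by move: za; rewrite /cay_arc invMg mulgA mulgK.
Qed.

Lemma ddist_trans x y h : ddist S (x * h) (y * h) = ddist S x y.
Proof. by rewrite /ddist; apply: eq_find => k; rewrite ball_trans. Qed.

Lemma tdist_trans x y h : tdist S (x * h) (y * h) = tdist S x y.
Proof. by rewrite /tdist !ddist_trans. Qed.

Lemma tdist1 x y : tdist S x y = tdist S 1 (y * x^-1).
Proof. by rewrite -(tdist_trans _ _ x^-1) mulgV. Qed.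

Lemma ddist0 x y : (ddist S x y == 0%N) = (x == y).
Proof.
rewrite /ddist.
have : (0 < #|gT|)%N by apply/card_gt0P; exists 1.
case: #|gT| => // n _ /=.
rewrite /= inE eq_sym [x == y]eq_sym; case: (y == x) => //.
Qed.

Definition cls g := [set y | tdist S 1 y == tdist S 1 g].
Definition rel (q : gT * gT) := [set p : gT * gT | tdist S p.1 p.2 == tdist S q.1 q.2].

Lemma tw_classesE : tw_classes S = [set cls x | x : gT].
Proof. by []. Qed.

Lemma cay_relsE : cay_rels S = [set rel q | q : gT * gT].
Proof. by []. Qed.

Lemma in_cls y g : (y \in cls g) = (tdist S 1 y == tdist S 1 g).
Proof. by rewrite inE. Qed.

Lemma cls_eq g g' : tdist S 1 g = tdist S 1 g' -> cls g = cls g'.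
Proof. by move=> e; apply/setP=> y; rewrite !in_cls e. Qed.

Lemma cls_self g : g \in cls g.
Proof. by rewrite in_cls. Qed.

Lemma sum_cls (l : {set gT} -> int) g :
  (\sum_(X in tw_classes S) l X * ul X g)%R = l (cls g).
Proof.
have Pg : cls g \in tw_classes S by apply: imset_f.
rewrite (bigD1 (cls g)) //= big1 ?GRing.addr0.
  by rewrite /ul ffunE cls_self GRing.mulr1.
move=> X /andP[/imsetP[x _ ->] ne].
rewrite /ul ffunE; case: ifP => [gx|_]; last by rewrite GRing.mulr0.
by move/negP: ne; case; apply/eqP; apply: cls_eq; apply/esym/eqP; rewrite -in_cls.
Qed.

Lemma zspanP a : zspan (tw_classes S) a <->
  (forall g g', tdist S 1 g = tdist S 1 g' -> a g = a g').
Proof.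
split=> [[l ->] g g' e|H].
  by rewrite !ffunE !sum_cls (cls_eq e).
exists (fun X => a (repr X)); apply/ffunP=> g; rewrite ffunE sum_cls.
have := mem_repr _ (cls_self g); rewrite in_cls => /eqP e; by apply: H; rewrite e.
Qed.


Lemma in_rel p q : (p \in rel q) = (tdist S p.1 p.2 == tdist S q.1 q.2).
Proof. by rewrite inE. Qed.

Lemma rel_in q : rel q \in cay_rels S.
Proof. exact: imset_f. Qed.

Lemma relsP R : R \in cay_rels S -> exists q, R = rel q.
Proof. by case/imsetP=> q _ ->; exists q. Qed.

Lemma rel_mem p q : p \in rel q -> rel p = rel q.
Proof. by rewrite in_rel => /eqP e; apply/setP=> u; rewrite !in_rel e. Qed.

Lemma rel1 x y : rel (x, y) = rel (1, y * x^-1).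
Proof. by apply/setP=> u; rewrite !in_rel /= -tdist1. Qed.

Lemma tdist_inv1 z : tdist S 1 z^-1 = tdist S z 1.
Proof. by rewrite -(tdist_trans _ _ z) mulVg mul1g. Qed.

Lemma tdist11 : tdist S 1 1 = (0%N, 0%N).
Proof. by rewrite /tdist; have /eqP -> : ddist S 1 1 == 0%N by rewrite ddist0. Qed.

Lemma tdist_eq0 x y : (tdist S x y == (0%N, 0%N)) = (x == y).
Proof.
rewrite /tdist xpair_eqE !ddist0; case: eqP => [->|]; first by rewrite eqxx.
by [].
Qed.

Lemma diag_rel : diagR gT = rel (1, 1).
Proof. by apply/setP=> p; rewrite in_rel inE tdist11 tdist_eq0. Qed.

Lemma cls1 : cls 1 = [set 1].
Proof. by apply/setP=> y; rewrite in_cls inE tdist11 tdist_eq0 eq_sym. Qed.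

Lemma cls_inv x : [set y^-1 | y in cls x] = cls x^-1.
Proof.
apply/setP=> z; rewrite -{1}(invgK z) mem_imset; last exact: invg_inj.
rewrite !in_cls !tdist_inv1 /tdist !xpair_eqE andbC.
by congr (_ && _); rewrite eq_sym.
Qed.

Lemma cls_partition : partition (tw_classes S) [set: gT].
Proof.
apply/and3P; split.
- apply/eqP/setP => g; rewrite inE; apply/bigcupP; exists (cls g).
    exact: imset_f.
  exact: cls_self.
- apply/trivIsetP => A B /imsetP[a _ ->] /imsetP[b _ ->] ne.
  apply/pred0P => y /=; apply/negbTE/negP; rewrite !in_cls => /andP[/eqP ya /eqP yb].
  by move/negP: ne; apply; apply/eqP; apply: cls_eq; rewrite -ya -yb.
- apply/imsetP => [[x _ e]]; by move: (cls_self x); rewrite /cls -e inE.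
Qed.


Definition regular :=
  forall R1 R2 R3, R1 \in cay_rels S -> R2 \in cay_rels S -> R3 \in cay_rels S ->
        forall x y x' y', (x, y) \in R3 -> (x', y') \in R3 ->
          #|[set z | ((x, z) \in R1) && ((z, y) \in R2)]| =
          #|[set z | ((x', z) \in R1) && ((z, y') \in R2)]|.

Lemma count_inv (reg : regular) x0 y0 g g' : tdist S 1 g = tdist S 1 g' ->
  #|[set k | (k \in cls y0) && (g * k^-1 \in cls x0)]| =
  #|[set k | (k \in cls y0) && (g' * k^-1 \in cls x0)]|.
Proof.
move=> e.
have := reg (rel (1,y0)) (rel (1,x0)) (rel (1,g)) (rel_in _) (rel_in _) (rel_in _) 1 g 1 g'.
rewrite !in_rel /= eqxx e eqxx => /(_ isT isT) E.
have F h : [set z | ((1, z) \in rel (1, y0)) && ((z, h) \in rel (1, x0))] =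
           [set k | (k \in cls y0) && (h * k^-1 \in cls x0)].
  by apply/setP=> k; rewrite !inE /= -tdist1.
by rewrite -!F.
Qed.

Lemma inj_rev (g : gT) : injective (fun k : gT => g * k^-1).
Proof. by move=> k1 k2 /mulgI /invg_inj. Qed.

Lemma expand (l m : {set gT} -> int) g :
  zg_mul [ffun g => (\sum_(X in tw_classes S) l X * ul X g)%R]
         [ffun g => (\sum_(X in tw_classes S) m X * ul X g)%R] g =
  (\sum_(X in tw_classes S) \sum_(Y in tw_classes S)
     l X * m Y * (#|[set k | (k \in Y) && ((g * k^-1)%g \in X)]|)%:R)%R.
Proof.
rewrite ffunE (reindex_inj (@inj_rev g)) /=.
transitivity (\sum_(k : gT) \sum_(X in tw_classes S) \sum_(Y in tw_classes S)
   l X * m Y * (ul X (g * k^-1)%g * ul Y k))%R.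
  apply: eq_bigr => k _; rewrite !ffunE invMg invgK mulgKV GRing.mulr_suml.
  apply: eq_bigr => X _; rewrite GRing.mulr_sumr; apply: eq_bigr => Y _.
  by rewrite GRing.mulrACA.
rewrite exchange_big; apply: eq_bigr => X _; rewrite exchange_big.
apply: eq_bigr => Y _; rewrite -GRing.mulr_sumr; congr (_ * _)%R.
rewrite (eq_bigr (fun k : gT => if k \in [set k | (k \in Y) && ((g * k^-1)%g \in X)] then 1%R else 0%R)).
  by rewrite -big_mkcond /= GRing.sumr_const.
move=> k _; rewrite /ul !ffunE inE.
by case: (k \in Y); case: ((g * k^-1)%g \in X); rewrite ?GRing.mulr1 ?GRing.mulr0.
Qed.

Lemma mul_closed (reg : regular) a b :
  zspan (tw_classes S) a -> zspan (tw_classes S) b -> zspan (tw_classes S) (zg_mul a b).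
Proof.
move=> [l ->] [m ->]; apply/zspanP => g g' e; rewrite !expand.
apply: eq_bigr => X /imsetP[x0 _ ->]; apply: eq_bigr => Y /imsetP[y0 _ ->].
by rewrite (count_inv reg x0 y0 e).
Qed.

Lemma sring (reg : regular) : is_Sring (twd_module S).
Proof.
split; first exact: mul_closed.
exists (tw_classes S); split.
- exact: cls_partition.
- by rewrite -cls1; apply: imset_f.
- by move=> X /imsetP[x _ ->]; rewrite cls_inv; apply: imset_f.
split=> // l H X /imsetP[x _ ->].
by have := congr1 (fun f : zg gT => f x) H; rewrite !ffunE sum_cls.
Qed.


Lemma inter_pos (reg : regular) R1 R2 R3 :
  R1 \in cay_rels S -> R2 \in cay_rels S -> R3 \in cay_rels S ->
  forall x y z, (x, y) \in R3 -> (x, z) \in R1 -> (z, y) \in R2 ->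
  inter_num (V:=gT) R1 R2 R3 != 0%N.
Proof.
move=> R1s R2s R3s x y z xy xz zy; rewrite /inter_num.
case: pickP => [[q1 q2] qR3 | none]; last by have := none (x, y); rewrite /= xy.
rewrite -(reg R1 R2 R3 R1s R2s R3s x y q1 q2 xy qR3) -lt0n.
by apply/card_gt0P; exists z; rewrite inE xz zy.
Qed.

Lemma inter_ex R1 R2 R3 : inter_num (V:=gT) R1 R2 R3 != 0%N ->
  exists q, q \in R3 /\ exists z, (q.1, z) \in R1 /\ (z, q.2) \in R2.
Proof.
rewrite /inter_num; case: pickP => [q qR3 | _]; last by rewrite eqxx.
rewrite -lt0n => /card_gt0P[z]; rewrite inE => /andP[a b].
by exists q; split => //; exists z.
Qed.

End Aux.

Unset Implicit Arguments.

Theorem proposition4p3 (gT : finGroupType) (S : {set gT}) :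
  (1%g \notin S) ->
  weakly_distance_regular S ->
  (primitive_Sring (twd_module S) <-> primitive_digraph S).
Proof.
move=> _ [_ [_ _ trans reg]].
have reg' : regular S := reg.
split.
- move=> [_ prim] R RRs Rnd F FRs Fcl RF.
  have Fs : forall R, R \in F -> R \in cay_rels S by move=> R0; apply/subsetP.
  have core : forall a b : gT, rel S (1, a)%g \in F -> rel S (1, b)%g \in F ->
      rel S (1, b * a^-1)%g \in F.
    move=> a b Fa Fb; have /subsetP := Fcl _ _ Fa Fb; apply.
    rewrite inE rel_in /=.
    apply: (@inter_pos _ S reg' _ _ _ (trans _ (Fs _ Fa)) (Fs _ Fb) (rel_in _ _)
              1%g (b * a^-1)%g a^-1%g).
    + by rewrite in_rel eqxx.
    + by rewrite inE in_rel /= tdist1 invgK mul1g.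
    + by rewrite in_rel /= tdist1 invgK mulgKV.
  case/relsP: RRs => [[q1 q2] Rq]; subst R.
  move: RF Rnd; rewrite rel1 => RF Rnd.
  set c := (q2 * q1^-1)%g in RF Rnd.
  have F1 : rel S (1, 1)%g \in F by have := core c c RF RF; rewrite mulgV.
  pose Hs := [set g | rel S (1, g)%g \in F].
  have gs : group_set Hs.
    apply/group_setP; split; first by rewrite inE.
    move=> x y; rewrite !inE => Fx Fy.
    have Fyi := core y 1%g Fy F1; rewrite mul1g in Fyi.
    by have := core y^-1%g x Fyi Fx; rewrite invgK.
  pose H := Group gs.
  have HE : forall g, (g \in H) = (rel S (1, g)%g \in F) by move=> g; rewrite inE.
  have uH : twd_module S (ul H).
    apply/zspanP => g g' e; rewrite /ul !ffunE !HE.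
    by have -> : rel S (1, g)%g = rel S (1, g')%g by apply/setP=> p; rewrite !in_rel /= e.
  case/orP: (prim H uH) => [/eqP H1 | /eqP HT].
    have : c \in H by rewrite HE.
    rewrite H1 inE => /eqP c1; case/negP: Rnd; by rewrite c1 (diag_rel S).
  apply/eqP; rewrite eqEsubset FRs /=; apply/subsetP => R' /relsP[[x y] ->].
  by rewrite rel1 -HE HT inE.
- move=> prim; split; first exact: sring.
  move=> H /zspanP Hc.
  have Hclass : forall g g', tdist S 1 g = tdist S 1 g' -> g \in H -> g' \in H.
    move=> g g' e gH; have := Hc g g' e; rewrite /ul !ffunE gH.
    by case: ifP.
  case: (boolP (H :==: 1)%g) => //= H1.
  case/trivgPn: H1 => h hH h1.
  pose F := [set R in cay_rels S | R \subset [set p | (p.2 * p.1^-1)%g \in H]].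
  have relH : forall p, p \in rel S (1, h)%g -> (p.2 * p.1^-1)%g \in H.
    move=> p; rewrite in_rel /= tdist1 => /eqP e.
    by apply: Hclass hH; rewrite -e.
  have FE : F = cay_rels S.
    apply: (prim (rel S (1, h)%g) (rel_in _ _)).
    + rewrite (diag_rel S); apply/negP => /eqP e.
      have : ((1, h)%g \in rel S (1, 1)%g) by rewrite -e in_rel eqxx.
      by rewrite in_rel /= tdist11 tdist_eq0 eq_sym (negbTE h1).
    + by apply/subsetP => R; rewrite inE => /andP[].
    + move=> R1 R2; rewrite !inE => /andP[_ /subsetP s1] /andP[_ /subsetP s2].
      apply/subsetP => R3; rewrite !inE => /andP[R3s nz].
      rewrite R3s /=.
      have [[q1 q2] [qR3 [z [zq1 zq2]]]] := inter_ex nz.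
      move: zq1; rewrite inE /= => zq1.
      have a1 : (q1 * z^-1)%g \in H by have := s1 _ zq1; rewrite inE.
      have a2 : (q2 * z^-1)%g \in H by have := s2 _ zq2; rewrite inE.
      have qH : (q2 * q1^-1)%g \in H.
        have := @groupM _ H _ _ a2 (groupVr a1).
        by rewrite invMg invgK mulgA mulgKV.
      case/relsP: R3s => q0 R3e; subst R3.
      apply/subsetP => p pR; rewrite inE.
      apply: (Hclass _ _ _ qH).
      move: pR qR3; rewrite !in_rel => /eqP e1 /eqP e2.
      by rewrite -!tdist1 /= e1 e2.
    + rewrite inE rel_in /=; apply/subsetP => p pR; rewrite inE; exact: relH.
  apply/eqP/setP => g; rewrite inE.
  have : rel S (1, g)%g \in F by rewrite FE rel_in.
  rewrite inE => /andP[_ /subsetP sub].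
  by have := sub (1, g)%g; rewrite in_rel eqxx inE /= invg1 mulg1 => /(_ isT).
Qed.
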